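(* Let $G$ be a quadrangulation of order $n$ and radius $r$, and let $v$ be a central vertex of $G$. Writing $n_i=|N_i(v)|$, we have (i) $n_i \geq 2$ for $i\in \{1,2,r-2,r-1\}$, and (ii) $n_i \geq 4$ for $i\in \{3,4,\ldots,r-3\}$.
   Context: A quadrangulation is a maximal bipartite planar graph, considered with a plane embedding; equivalently, a simple connected plane bipartite graph in which every face is bounded by a cycle of length $4$. The eccentricity of a vertex $u$ is $e(u)=\max_{x\in V(G)} d_G(u,x)$; the radius $r$ of $G$ is the minimum eccentricity, and a central vertex is a vertex whose eccentricity equals the radius. $N_i(v)$ denotes the set of vertices at distance exactly $i$ from $v$. *)

(* Defs.v *)
From mathcomp Require Import all_boot.
Set Implicit Arguments. Unset Strict Implicit. Unset Printing Implicit Defensive.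

(* A plane embedding is given combinatorially by a rotation system
   (Heffter-Edmonds): rho u w is the neighbour of u following w in the cyclic
   order around u. *)

Section Graph.
Variable V : finType.
Variable adj : rel V.

Definition simple_graph : Prop :=
  (forall u, ~~ adj u u) /\ (forall u w, adj u w = adj w u).

Definition connected_graph : Prop := forall u w, connect adj u w.

Definition bipartite : Prop :=
  exists c : V -> bool, forall u w, adj u w -> c u != c w.

Definition dart (d : V * V) : bool := adj d.1 d.2.

Definition darts : {set V * V} := [set d | dart d].

Definition rotation_system (rho : V -> V -> V) : Prop :=
  forall u,
    (forall w, adj u w -> adj u (rho u w)) /\
    {in [pred w | adj u w] &, injective (rho u)} /\
    (forall w w', adj u w -> adj u w' -> exists k, iter k (rho u) w = w').

Definition face_perm (rho : V -> V -> V) (d : V * V) : V * V :=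
  (d.2, rho d.2 d.1).

Definition faces (rho : V -> V -> V) : {set {set V * V}} :=
  [set [set d' | fconnect (face_perm rho) d d'] | d in darts].

(* Euler's formula |V| - |E| + |F| = 2, with |E| = |darts| / 2, written
   without subtraction. *)
Definition spherical (rho : V -> V -> V) : Prop :=
  2 * #|V| + 2 * #|faces rho| = #|darts| + 4.

Definition quad_faces (rho : V -> V -> V) : Prop :=
  forall d, dart d ->
    let phi := face_perm rho in
    iter 4 phi d = d /\
    uniq [:: d.1; (phi d).1; (iter 2 phi d).1; (iter 3 phi d).1].

Definition quadrangulation (rho : V -> V -> V) : Prop :=
  simple_graph /\ connected_graph /\ bipartite /\
  rotation_system rho /\ spherical rho /\ quad_faces rho.

Fixpoint ball (k : nat) (u : V) : {set V} :=
  if k is k'.+1 then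
    ball k' u :|: [set x | [exists y in ball k' u, adj y x]]
  else [set u].

(* d_G(u,x) = least k with x in the k-ball around u (searched up to |V|,
   which suffices in a connected graph) *)
Definition dist (u x : V) : nat :=
  find (fun k => x \in ball k u) (iota 0 #|V|).

Definition ecc (u : V) : nat := \max_(x : V) dist u x.

Definition central (v : V) : Prop := forall w, ecc v <= ecc w.

Definition Nsphere (v : V) (i : nat) : {set V} := [set x | dist v x == i].

End Graph.

(* Main.v *)
Require Import Defs.
From mathcomp Require Import all_boot.
From mathcomp Require Import zify.
Set Implicit Arguments. Unset Strict Implicit. Unset Printing Implicit Defensive.


Section Dist.
Variable V : finType.
Variable adj : rel V.
Hypothesis adj_sym : forall u w, adj u w = adj w u.
Hypothesis conn : connected_graph adj.

Lemma ballS k u x : (x \in ball adj k.+1 u) = (x \in ball adj k u) || [exists y in ball adj k u, adj y x].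
Proof. by rewrite /= !inE. Qed.

Lemma ball0 u x : (x \in ball adj 0 u) = (x == u).
Proof. by rewrite /= inE. Qed.

Lemma ball_le k l u x : k <= l -> x \in ball adj k u -> x \in ball adj l u.
Proof.
elim: l => [|l IH]; first by rewrite leqn0 => /eqP ->.
rewrite leq_eqVlt => /orP [/eqP -> //|/IH H] /H Hx.
by rewrite ballS Hx.
Qed.

Lemma ball_adj k u y x : y \in ball adj k u -> adj y x -> x \in ball adj k.+1 u.
Proof. move=> Hy Hyx; rewrite ballS; apply/orP; right; apply/existsP; exists y; by rewrite Hy. Qed.

Lemma ball_trans a b u x y : x \in ball adj a u -> y \in ball adj b x -> y \in ball adj (a + b) u.
Proof.
move=> Hx; elim: b y => [|b IH] y; first by rewrite ball0 addn0 => /eqP ->.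
rewrite ballS => /orP [/IH H|/existsP [z /andP [Hz Hzy]]].
  by apply: ball_le H; rewrite leq_add2l.
by rewrite addnS; apply: ball_adj (IH _ Hz) Hzy.
Qed.

Lemma ball_sym k u x : x \in ball adj k u -> u \in ball adj k x.
Proof.
elim: k x => [|k IH] x; first by rewrite !ball0 eq_sym.
rewrite ballS => /orP [/IH H|/existsP [y /andP [Hy Hyx]]].
  by apply: ball_le H.
have H1 : y \in ball adj 1 x by apply: ball_adj (x) _ _ _; rewrite ?ball0 // adj_sym.
by have := ball_trans H1 (IH _ Hy); rewrite add1n.
Qed.

Lemma ball_path x p : path adj x p -> last x p \in ball adj (size p) x.
Proof.
elim: p x => [|y p IH] x /=; first by rewrite ball0.
move=> /andP [Hxy Hp].
have H1 : y \in ball adj 1 x by apply: ball_adj (x) _ _ _; rewrite ?ball0.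
by have := ball_trans H1 (IH _ Hp); rewrite add1n.
Qed.

Lemma ball_conn u x : x \in ball adj #|V|.-1 u.
Proof.
have := conn u x => /connectP [p Hp ->].
case: (shortenP Hp) => p' Hp' Hu _.
apply: ball_le (ball_path Hp').
have := max_card (mem (u :: p')); rewrite (card_uniqP Hu) /=; lia.
Qed.

Lemma dist_ball u x : x \in ball adj (dist adj u x) u.
Proof.
rewrite /dist.
have Hn : 0 < #|V| by apply/card_gt0P; exists u.
have Hh : has (fun k => x \in ball adj k u) (iota 0 #|V|).
  apply/hasP; exists #|V|.-1; last exact: ball_conn.
  rewrite mem_iota; lia.
have Hf := Hh; rewrite has_find size_iota in Hf.
by have := nth_find 0 Hh; rewrite nth_iota.
Qed.

Lemma dist_min u x k : x \in ball adj k u -> dist adj u x <= k.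
Proof.
move=> Hk; case: (leqP (dist adj u x) k) => // Hlt.
have Hs := find_size (fun k => x \in ball adj k u) (iota 0 #|V|).
rewrite size_iota in Hs.
have := before_find 0 Hlt; rewrite nth_iota ?add0n ?Hk //.
rewrite /dist in Hlt; lia.
Qed.

Lemma dist_le u x k : (dist adj u x <= k) = (x \in ball adj k u).
Proof.
apply/idP/idP; last exact: dist_min.
by move=> H; apply: ball_le H (dist_ball u x).
Qed.

Lemma dist_tri u x y : dist adj u y <= dist adj u x + dist adj x y.
Proof. by rewrite dist_le; apply: ball_trans (dist_ball _ _) (dist_ball _ _). Qed.

Lemma dist_sym u x : dist adj u x = dist adj x u.
Proof.
by apply/eqP; rewrite eqn_leq !dist_le; apply/andP; split; apply: ball_sym; apply: dist_ball.
Qed.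

Lemma dist_self u : dist adj u u = 0.
Proof. by apply/eqP; rewrite -leqn0 dist_le ball0. Qed.

Lemma dist_adj x y : adj x y -> dist adj x y <= 1.
Proof. by move=> H; rewrite dist_le; apply: ball_adj H; rewrite ball0. Qed.

Lemma dist_pred u x k : dist adj u x = k.+1 -> exists y, dist adj u y = k /\ adj y x.
Proof.
move=> Hd.
have Hx : x \in ball adj k.+1 u by rewrite -dist_le Hd.
have Hnx : x \notin ball adj k u by rewrite -dist_le Hd ltnn.
move: Hx; rewrite ballS (negbTE Hnx) /= => /existsP [y /andP [Hy Hyx]].
exists y; split => //.
apply/eqP; rewrite eqn_leq dist_le Hy /=; rewrite leqNgt; apply/negP => Hlt.
move: Hnx; rewrite -dist_le -ltnS => /negP; apply.
rewrite ltnS dist_le; apply: ball_le (ball_adj (dist_ball u y) Hyx); lia.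
Qed.

Lemma dist_geo v y k i : dist adj v y = k -> i <= k ->
  exists z, dist adj v z = i /\ dist adj z y <= k - i.
Proof.
elim: k y => [|k IH] y Hy Hi.
  by exists y; move: Hi; rewrite leqn0 => /eqP ->; rewrite dist_self Hy.
case: (leqP i k) => Hik; last first.
  have -> : i = k.+1 by lia.
  by exists y; rewrite dist_self Hy subnn.
have [y' [Hy' Hadj]] := dist_pred Hy.
have [z [Hz Hzy]] := IH _ Hy' Hik.
exists z; split => //.
have := dist_tri z y' y; have := dist_adj Hadj; lia.
Qed.

Variable v : V.
Variable c : V -> bool.
Hypothesis hc : forall u w, adj u w -> c u != c w.

Lemma color_dist k x : dist adj v x = k -> c x = c v (+) odd k.
Proof.
elim: k x => [|k IH] x Hx.
  have : x \in ball adj 0 v by rewrite -dist_le Hx.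
  by rewrite ball0 => /eqP ->; rewrite addbF.
have [y [Hy Hyx]] := dist_pred Hx.
have := hc Hyx; rewrite (IH _ Hy) /=.
by case: (c x); case: (c v); case: (odd k).
Qed.

Lemma adj_dist x y : adj x y ->
  dist adj v y = (dist adj v x).+1 \/ dist adj v x = (dist adj v y).+1.
Proof.
move=> H.
have H1 := dist_adj H. have H2 : dist adj y x <= 1 by apply: dist_adj; rewrite adj_sym.
have T1 := dist_tri v x y. have T2 := dist_tri v y x.
have Hne : dist adj v x != dist adj v y.
  apply/eqP => E; have := hc H.
  by rewrite (color_dist (erefl _)) (color_dist (esym E)) eqxx.
move: Hne => /eqP; lia.
Qed.

End Dist.

Lemma iter_switch (T : Type) (f : T -> T) (P : pred T) k x :
  ~~ P x -> P (iter k f x) -> exists t, ~~ P (iter t f x) /\ P (iter t.+1 f x).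
Proof.
move=> Hx; elim: k => [|k IH] /=; first by move=> H; rewrite H in Hx.
case Hk: (P (iter k f x)); first by move=> _; apply: IH.
by move=> H; exists k; rewrite Hk.
Qed.

Section Switch.
Variable V : finType.
Variable adj : rel V.
Variable rho : V -> V -> V.
Hypothesis adj_sym : forall u w, adj u w = adj w u.
Hypothesis conn : connected_graph adj.
Variable c : V -> bool.
Hypothesis hc : forall u w, adj u w -> c u != c w.
Hypothesis hrs : rotation_system adj rho.
Hypothesis hqf : quad_faces adj rho.
Variable v : V.

Lemma switch a i : dist adj v a = i.+1 ->
  (exists w, adj a w /\ dist adj v w = i.+2) ->
  exists x s, [/\ adj x a, adj x s, dist adj v x = i, dist adj v s = i.+1 &
     s != a /\ exists w', adj s w' /\ dist adj v w' = i.+2].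
Proof.
move=> Ha [w0 [Haw0 Hw0]].
have [x0 [Hx0 Hx0a]] := dist_pred conn Ha.
have Hax0 : adj a x0 by rewrite adj_sym.
have [Hr1 [_ Hr3]] := hrs a.
have [k Hk] := Hr3 _ _ Hax0 Haw0.
have Hit : forall t, adj a (iter t (rho a) x0).
  by elim=> [|t IH] //=; apply: Hr1.
have N1 : ~~ (dist adj v x0 == i.+2) by rewrite Hx0; lia.
have N2 : (dist adj v (iter k (rho a) x0) == i.+2) by rewrite Hk Hw0.
have [t [Ht1 Ht2]] := @iter_switch _ (rho a) (fun n => dist adj v n == i.+2) k x0 N1 N2.
set x := iter t (rho a) x0 in Ht1 Ht2.
have Hxa : adj a x by apply: Hit.
have Hy : dist adj v (rho a x) = i.+2 by apply/eqP.
have Hx : dist adj v x = i.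
  have := adj_dist adj_sym conn v hc Hxa; rewrite Ha; move: Ht1 => /eqP; lia.
have Hay : adj a (rho a x) by apply: Hr1.
set y := rho a x in Hy Hay.
have Hd : dart adj (x, a) by rewrite /dart /= adj_sym.
have [H4 Hu] := hqf Hd.
move: H4 Hu; rewrite /face_perm /= -/y.
set s := rho y a.
move=> [E1 E2] Hu.
have Hys : adj y s by apply: (hrs y).1; rewrite adj_sym.
have Hsx : adj s x by rewrite -E1; apply: (hrs s).1; rewrite adj_sym.
exists x, s; split => //; first by rewrite adj_sym.
  have := adj_dist adj_sym conn v hc Hsx; have := adj_dist adj_sym conn v hc Hys.
  rewrite Hx Hy; lia.
split; last by exists y; split => //; rewrite adj_sym.
apply/eqP => Esa; move: Hu; rewrite Esa /= !inE.
by rewrite eqxx !orbT /= andbF.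
Qed.

End Switch.

Theorem lemma2p5 (V : finType) (adj : rel V) (rho : V -> V -> V)
  (hQ : quadrangulation adj rho) (v : V) (hv : central adj v) :
  let r := ecc adj v in
  (forall i, i \in [:: 1; 2; r - 2; r - 1] -> 1 <= i <= r - 1 ->
     2 <= #|Nsphere adj v i|) /\
  (forall i, 3 <= i <= r - 3 -> 4 <= #|Nsphere adj v i|).
Proof.
move: hQ => [[_ adj_sym] [conn [[c hc] [hrs [_ hqf]]]]].
move=> r.
have ecc_ge y : dist adj v y <= r by rewrite /r /ecc; exact: leq_bigmax.
have [yr Hyr] : exists y, dist adj v y = r.
  have Hn : 0 < #|V| by apply/card_gt0P; exists v.
  by have [y Hy] := eq_bigmax (dist adj v) Hn; exists y; rewrite /r /ecc Hy.
have level k : k <= r -> exists z, dist adj v z = k.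
  by move=> Hk; have [z [Hz _]] := dist_geo conn Hyr Hk; exists z.
have active i : i.+2 <= r ->
    exists a, dist adj v a = i.+1 /\ exists w, adj a w /\ dist adj v w = i.+2.
  move=> Hi; have [z Hz] := level _ Hi.
  have [a [Ha Haz]] := dist_pred conn Hz.
  by exists a; split => //; exists z.
have ecc_contra m : (forall y, dist adj m y <= r.-1) -> 0 < r -> False.
  move=> Hm Hr; have := hv m; rewrite -/r.
  have : ecc adj m <= r.-1 by apply/bigmax_leqP => y _; apply: Hm.
  lia.
have dsym := dist_sym adj_sym conn.
have dtri := dist_tri conn.
have dadj x y : adj x y -> dist adj x y <= 1 := dist_adj conn (x:=x) (y:=y).
have d2 p q x : adj x p -> adj x q -> dist adj p q <= 2.
  move=> Hp Hq; have := dtri p x q; rewrite (dsym p x).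
  have := dadj _ _ Hp; have := dadj _ _ Hq; lia.
split.
  move=> [|j] _ /andP [H1 H2] //.
  have [a [Ha Hw]] : exists a, dist adj v a = j.+1 /\ exists w, adj a w /\ dist adj v w = j.+2.
    by apply: active; lia.
  have [x [s [Hxa Hxs Hx Hs [Hsa _]]]] := switch adj_sym conn hc hrs hqf Ha Hw.
  apply: leq_trans (subset_leq_card (A:=[set a; s]) _); first by rewrite cards2 eq_sym Hsa.
  by apply/subsetP => z; rewrite !inE => /orP [/eqP->|/eqP->]; rewrite ?Ha ?Hs.
move=> [|j] /andP [H1 H2] //.
rewrite leqNgt; apply/negP => Hlt.
have [a [Ha Hw]] : exists a, dist adj v a = j.+1 /\ exists w, adj a w /\ dist adj v w = j.+2.
    by apply: active; lia.
have [x [b [Hxa Hxb Hx Hb [Hba _]]]] := switch adj_sym conn hc hrs hqf Ha Hw.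
have far y : j.+2 <= dist adj v y -> exists z, [/\ dist adj v z = j.+1,
    (exists w, adj z w /\ dist adj v w = j.+2) & dist adj z y <= dist adj v y - j.+1].
  move=> Hy.
  have [z' [Hz' Hz'y]] := dist_geo conn (erefl _) Hy.
  have [z [Hz Hzz']] := dist_pred conn Hz'.
  exists z; split => //; first by exists z'.
  have := dtri z z' y; have := dadj _ _ Hzz'; lia.
case: (boolP [exists c0, [&& dist adj v c0 == j.+1,
          [exists w, adj c0 w && (dist adj v w == j.+2)], c0 != a & c0 != b]]).
- move=> /existsP [c0 /and4P [/eqP Hc /existsP [w /andP [Hcw /eqP Hw']] Hca Hcb]].
  have Hall z : dist adj v z = j.+1 -> [|| z == a, z == b | z == c0].
    move=> Hz.
    have Hsub : [set a; b; c0] \subset Nsphere adj v j.+1.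
      by apply/subsetP => y; rewrite !inE => /orP [/orP [/eqP->|/eqP->]|/eqP->]; rewrite ?Ha ?Hb ?Hc.
    have Hcard : #|[set a; b; c0]| = 3.
      rewrite setUC cardsU1 cards2 !inE (negbTE Hca) (negbTE Hcb) /=.
      by rewrite eq_sym Hba.
    have Heq : [set a; b; c0] == Nsphere adj v j.+1.
      by rewrite eqEcard Hsub Hcard; lia.
    have : z \in [set a; b; c0] by rewrite (eqP Heq) inE Hz.
    by rewrite !inE -orbA.
  have [x' [s [Hx'c Hx's _ Hs [Hsc _]]]] :=
    switch adj_sym conn hc hrs hqf Hc (ex_intro _ w (conj Hcw Hw')).
  have dab := d2 _ _ _ Hxa Hxb.
  have dcs := d2 _ _ _ Hx'c Hx's.
  have [h [Hh Hhub]] : exists h, dist adj v h = j.+1 /\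
      forall z, dist adj v z = j.+1 -> dist adj h z <= 2.
    move: (Hall _ Hs); rewrite (negbTE Hsc) orbF => /orP [] /eqP Es; subst s.
      exists a; split => // z /Hall /orP [/eqP->|/orP [/eqP->|/eqP->]]; rewrite ?dist_self //.
      by rewrite dsym.
    exists b; split => // z /Hall /orP [/eqP->|/orP [/eqP->|/eqP->]]; rewrite ?dist_self //; by rewrite dsym.
  have H3 : 3 <= j.+1 by lia.
  have [m [Hm Hmh]] := dist_geo conn Hh H3.
  apply: (ecc_contra m) => [y|]; last by lia.
  case: (leqP j.+1 (dist adj v y)) => Hy.
    have [z [Hz Hzy]] := dist_geo conn (erefl _) Hy.
    have := Hhub _ Hz; have := dtri m h y; have := dtri h z y; have := ecc_ge y; lia.
  have := dtri m v y; rewrite (dsym m v) Hm; lia.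
- rewrite negb_exists => /forallP Hno.
  have H1' : 1 <= j by lia.
  have [u [Hu Hux]] := dist_geo conn Hx H1'.
  apply: (ecc_contra u) => [y|]; last by lia.
  case: (leqP j.+2 (dist adj v y)) => Hy.
    have [z [Hz [w [Hzw Hw']] Hzy]] := far _ Hy.
    have Hxz : adj x z.
      move: (Hno z); rewrite Hz eqxx /=.
      have -> : [exists w0, adj z w0 && (dist adj v w0 == j.+2)].
        by apply/existsP; exists w; rewrite Hzw Hw' eqxx.
      by case: eqP => [->|_] //=; case: eqP => [->|] //.
    have := dadj _ _ Hxz; have := dtri u x y; have := dtri x z y; have := ecc_ge y; lia.
  have := dtri u v y; rewrite (dsym u v) Hu; lia.
Qed.
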